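(* Let $q$ be a prime power and let $n,k$ be integers with $3\le k\le n-2\le q-2$. Let $\Lambda=\{\alpha_1,\dots,\alpha_n\}\subseteq\mathbb{F}_q$ with the $\alpha_i$ pairwise distinct, and let $C_{k-1,k-2}$ be the linear code generated by the $k\times n$ matrix whose rows are $(\alpha_1^{e},\dots,\alpha_n^{e})$ for $e=0,1,\dots,k-3,k,k+1$. Then $C_{k-1,k-2}$ is MDS if and only if $$S_2(\beta_1,\dots,\beta_k)^2-S_1(\beta_1,\dots,\beta_k)S_3(\beta_1,\dots,\beta_k)\neq 0$$ for every $k$-element subset $\{\beta_1,\dots,\beta_k\}\subseteq\Lambda$ (with the $\beta_i$ distinct).
   Context: Convention: $0^0=1$. $S_t(x_1,\dots,x_m)=\sum_{t_1+\dots+t_m=t,\ t_i\ge0}x_1^{t_1}\cdots x_m^{t_m}$ is the complete homogeneous symmetric polynomial of degree $t$. An $[n,k,d]$ linear code is MDS if $d=n-k+1$. *)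

(* Defs.v *)
From HB Require Import structures.
From mathcomp Require Import all_boot all_order all_algebra all_field.
Set Implicit Arguments. Unset Strict Implicit. Unset Printing Implicit Defensive.
Import GRing.Theory.
Local Open Scope ring_scope.

(* Complete homogeneous symmetric polynomial of degree t evaluated at
   x_1..x_m: sum over (t_1..t_m) with t_i >= 0, sum t_i = t, of prod x_i^t_i
   (exponents t_i <= t, so ranging over 'I_t.+1 loses nothing). 0^0 = 1. *)
Definition hsym (F : comRingType) (m t : nat) (x : 'I_m -> F) : F :=
  \sum_(e : {ffun 'I_m -> 'I_t.+1} | (\sum_(i < m) (e i : nat) == t)%N)
     \prod_(i < m) x i ^+ (e i).

Definition hweight (F : fieldType) (n : nat) (v : 'rV[F]_n) : nat :=
  #|[set j : 'I_n | v 0 j != 0]|.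

(* Minimum distance of the code spanned by the rows of G (minimum weight of a
   nonzero codeword u *m G); defaults to n if there is no nonzero codeword. *)
Definition min_dist (F : finFieldType) (k n : nat) (G : 'M[F]_(k, n)) : nat :=
  \big[minn/n]_(u : 'rV[F]_k | u *m G != 0) hweight (u *m G).

Definition is_MDS (F : finFieldType) (k n : nat) (G : 'M[F]_(k, n)) : Prop :=
  min_dist G = (n - \rank G + 1)%N.

Definition gen_mx (F : fieldType) (k n : nat) (alpha : 'I_n -> F) : 'M[F]_(k, n) :=
  \matrix_(i < k, j < n) alpha j ^+ (if (i < k - 2)%N then (i : nat) else (i + 2)%N).

(* Main.v *)
Require Import Defs.
From HB Require Import structures.
From mathcomp Require Import all_boot all_order all_algebra all_field.
From mathcomp Require Import ring zify.
Set Implicit Arguments. Unset Strict Implicit. Unset Printing Implicit Defensive.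
Import GRing.Theory.
Local Open Scope ring_scope.

Section Poly.
Variable F : fieldType.

Definition Hp k (b : 'I_k -> F) : {poly F} :=
  \prod_(i < k) \sum_(j < 4) (b i ^+ j) *: 'X^j.
Definition Ep k (b : 'I_k -> F) : {poly F} := \prod_(i < k) (1 - (b i)%:P * 'X).
Definition Pp k (b : 'I_k -> F) : {poly F} := \prod_(i < k) ('X - (b i)%:P).

Lemma Hcoef k (b : 'I_k -> F) t : (t <= 3)%N -> (Hp b)`_t = hsym t b.
Proof.
move=> ht; rewrite /Hp bigA_distr_bigA /=.
have eP (f : {ffun 'I_k -> 'I_4}) :
  \prod_i (b i ^+ f i *: 'X^(f i)) = (\prod_i b i ^+ f i) *: 'X^(\sum_i (f i : nat)).
  rewrite -mul_polyC rmorph_prod -prodrXr -big_split /=.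
  by apply: eq_bigr => i _; rewrite mul_polyC.
under eq_bigr do rewrite eP.
rewrite coef_sumMXn /hsym.
have ht4 : (t.+1 <= 4)%N by [].
pose h (g : {ffun 'I_k -> 'I_t.+1}) : {ffun 'I_k -> 'I_4} := [ffun i => widen_ord ht4 (g i)].
pose h' (f : {ffun 'I_k -> 'I_4}) : {ffun 'I_k -> 'I_t.+1} := [ffun i => inord (f i)].
rewrite (reindex_onto h h').
  apply: eq_big => g.
    rewrite /=.
    have -> : (\sum_i (h g i : nat) = \sum_i (g i : nat))%N.
      by apply: eq_bigr => i _; rewrite ffunE.
    have -> : h' (h g) == g.
      by apply/eqP/ffunP => i; rewrite !ffunE; apply/val_inj; rewrite /= inordK.
    by rewrite andbT.
  by move=> _; apply: eq_bigr => i _; rewrite ffunE.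
move=> f /= /eqP hf; apply/ffunP => i; rewrite !ffunE; apply/val_inj => /=.
rewrite inordK // ltnS -hf (bigD1 i) //=; exact: leq_addr.
Qed.

Lemma size_Pp k (b : 'I_k -> F) : size (Pp b) = k.+1.
Proof. by rewrite /Pp size_prod_XsubC -[index_enum _]filter_predT deprecated_filter_index_enum -cardE card_ord. Qed.

Lemma rev_coef k (b : 'I_k -> F) :
  (forall j, (j <= k)%N -> (Pp b)`_(k - j) = (Ep b)`_j) /\
  (forall j, (k < j)%N -> (Ep b)`_j = 0).
Proof.
elim: k b => [|k IH] b.
  rewrite /Pp /Ep !big_ord0; split => j.
    by rewrite leqn0 => /eqP ->.
  by rewrite coef1; case: j.
have [IH1 IH2] := IH (fun i => b (lift ord0 i)).
have sP := size_Pp (fun i => b (lift ord0 i)).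
move: IH1 IH2 sP; rewrite /Pp /Ep !big_ord_recl.
set P := \prod_(i < k) _; set Q := \prod_(i < k) _ => IH1 IH2 sP.
have eP i : (('X - (b ord0)%:P) * P)`_i = (if i == 0%N then 0 else P`_i.-1) - b ord0 * P`_i.
  by rewrite mulrBl coefB coefXM coefCM.
have eQ i : ((1 - (b ord0)%:P * 'X) * Q)`_i = Q`_i - b ord0 * (if i == 0%N then 0 else Q`_i.-1).
  by rewrite mulrBl mul1r coefB -mulrA coefCM coefXM.
split.
  move=> j hj; rewrite eP eQ; case: j hj => [|j] hj.
    rewrite subn0 /= (@nth_default _ 0 P k.+1); last by rewrite sP.
    by rewrite !mulr0 !subr0 -(IH1 0%N) // subn0.
  rewrite subSS /=.
  have hj' : (j <= k)%N by [].
  case: (ltnP j k) => hjk.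
    have -> : (k - j = (k - j.+1).+1)%N by lia.
    by rewrite /= -IH1 // -IH1 //; congr (_ - _ * _); congr (P`_ _); lia.
  have ejk : j = k by lia.
  subst j; rewrite subnn /= IH2 // -IH1 // subnn.
  by rewrite !sub0r.
move=> j hj; rewrite eQ IH2; last lia.
case: j hj => [//|j] hj /=; rewrite IH2; last lia.
by rewrite mulr0 subr0.
Qed.

Lemma prod_1X n I (r : seq I) (G : I -> {poly F}) :
  (forall i, exists q, G i = 1 + 'X^n * q) ->
  exists q, \prod_(i <- r) G i = 1 + 'X^n * q.
Proof.
move=> hG; apply: (big_ind (fun p => exists q, p = 1 + 'X^n * q)).
- by exists 0; rewrite mulr0 addr0.
- move=> x y [q1 ->] [q2 ->]; exists (q1 + q2 + 'X^n * q1 * q2); ring.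
- by move=> i _; exact: hG.
Qed.

Lemma EH k (b : 'I_k -> F) : exists q, Ep b * Hp b = 1 + 'X^4 * q.
Proof.
rewrite /Ep /Hp -big_split /=; apply: prod_1X => i.
set c := b i.
have -> : \sum_(j < 4) c ^+ j *: 'X^j = \sum_(j < 4) (c%:P * 'X) ^+ j.
  by apply: eq_bigr => j _; rewrite exprMn -polyC_exp mul_polyC.
have -> : (1 - c%:P * 'X) * \sum_(j < 4) (c%:P * 'X) ^+ j = 1 - (c%:P * 'X) ^+ 4.
  by rewrite -opprB mulNr -subrX1 opprB.
by exists (- (c ^+ 4)%:P); rewrite exprMn -polyC_exp; ring.
Qed.

Lemma E0 k (b : 'I_k -> F) : (Ep b)`_0 = 1.
Proof.
have [q ->] : exists q, Ep b = 1 + 'X^1 * q.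
  by apply: prod_1X => i; exists (- (b i)%:P); rewrite expr1; ring.
by rewrite coefD coef1 coefXnM /= addr0.
Qed.

Lemma Dh_Da k (b : 'I_k -> F) :
  hsym 2 b ^+ 2 - hsym 1 b * hsym 3 b =
  (Ep b)`_2 ^+ 2 - (Ep b)`_1 * (Ep b)`_3.
Proof.
rewrite -!Hcoef //.
have [q hq] := EH b.
have c t : (t < 4)%N -> (Ep b * Hp b)`_t = (t == 0%N)%:R.
  by move=> ht; rewrite hq coefD coef1 coefXnM ht addr0.
have c0 := c 0%N isT; have c1 := c 1%N isT; have c2 := c 2%N isT; have c3 := c 3%N isT.
rewrite !coefM !big_ord_recr !big_ord0 /= !add0r in c0 c1 c2 c3.
rewrite !subnn !subn0 E0 !mul1r in c0 c1 c2 c3.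
rewrite /= in c1 c2 c3.
set E1 := (Ep b)`_1 in c1 c2 c3 *; set E2 := (Ep b)`_2 in c2 c3 *; set E3 := (Ep b)`_3 in c3 *.
set H0 := (Hp b)`_0 in c0 c1 c2 c3; set H1 := (Hp b)`_1 in c1 c2 c3 *.
set H2 := (Hp b)`_2 in c2 c3 *; set H3 := (Hp b)`_3 in c3 *.
have eH1 : H1 = - E1.
  by rewrite (_ : H1 = (H1 + E1 * H0) - E1 * H0); [rewrite c1 c0; ring | ring].
have eH2 : H2 = E1 ^+ 2 - E2.
  by rewrite (_ : H2 = (H2 + E1 * H1 + E2 * H0) - E1 * H1 - E2 * H0); [rewrite c2 c0 eH1; ring | ring].
have eH3 : H3 = - E1 ^+ 3 + 2 * E1 * E2 - E3.
  by rewrite (_ : H3 = (H3 + E1 * H2 + E2 * H1 + E3 * H0) - E1 * H2 - E2 * H1 - E3 * H0); [rewrite c3 c0 eH1 eH2; ring | ring].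
rewrite eH1 eH2 eH3; ring.
Qed.

Definition Ex k (r : nat) : nat := if (r < k - 2)%N then r else (r + 2)%N.
Definition pu k (u : 'rV[F]_k) : {poly F} := \sum_(r < k) u 0 r *: 'X^(Ex k r).

Lemma Ex_inj k (r s : nat) : Ex k r = Ex k s -> r = s.
Proof. by rewrite /Ex; case: ifP; case: ifP; lia. Qed.

Lemma coef_pu k (u : 'rV[F]_k) i : (pu u)`_i = \sum_(r < k | Ex k r == i) u 0 r.
Proof. by rewrite coef_sumMXn. Qed.

Lemma coef_puE k (u : 'rV[F]_k) (r : 'I_k) : (pu u)`_(Ex k r) = u 0 r.
Proof.
rewrite coef_pu (big_pred1 r) // => s.
by apply/eqP/eqP => [/Ex_inj/val_inj|->].
Qed.

Lemma coef_pu0 k (u : 'rV[F]_k) i : (forall r : 'I_k, Ex k r != i) -> (pu u)`_i = 0.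
Proof. by move=> h; rewrite coef_pu big_pred0 // => r; apply/negbTE. Qed.

Lemma pu_eq0 k (u : 'rV[F]_k) : pu u = 0 -> u = 0.
Proof. by move=> h; apply/rowP => r; rewrite mxE -coef_puE h coef0. Qed.

Lemma Ex_lt k (r : 'I_k) : (Ex k r < k + 2)%N.
Proof. by have := ltn_ord r; rewrite /Ex; case: ifP; lia. Qed.

Lemma size_pu k (u : 'rV[F]_k) : (size (pu u) <= k + 2)%N.
Proof.
apply/leq_sizeP => j hj; apply: coef_pu0 => r.
by apply/eqP => e; have := Ex_lt r; rewrite e; lia.
Qed.

Lemma notin_Ex k i : (2 <= k)%N -> (forall r : 'I_k, Ex k r != i) ->
  i = (k - 2)%N \/ i = (k - 1)%N \/ (k + 2 <= i)%N.
Proof.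
move=> hk h.
case: (ltnP i (k - 2)) => h1.
  have hi : (i < k)%N by lia.
  by have := h (Ordinal hi); rewrite /Ex /= h1 eqxx.
case: (ltnP i k) => h2; first lia.
case: (ltnP i (k + 2)) => h3; last by right; right.
exfalso.
have hr : ((i - 2) < k)%N by lia.
by have := h (Ordinal hr); rewrite /Ex /=; case: ifP; [lia | move=> _; apply/negP; rewrite negbK; apply/eqP; lia].
Qed.

Lemma coefqP (q0 q1 : F) (P : {poly F}) i :
  ((q0%:P + q1%:P * 'X) * P)`_i = q0 * P`_i + q1 * (if i == 0%N then 0 else P`_i.-1).
Proof. by rewrite mulrDl coefD coefCM -mulrA coefCM coefXM. Qed.

Lemma PpE k (b : 'I_k -> F) :
  \prod_(z <- [seq b i | i <- enum 'I_k]) ('X - z%:P) = Pp b.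
Proof. by rewrite big_map big_enum. Qed.

Lemma Pcoefs k (b : 'I_k -> F) : (3 <= k)%N ->
  [/\ (Pp b)`_(k - 1) = (Ep b)`_1, (Pp b)`_(k - 2) = (Ep b)`_2 & (Pp b)`_(k - 3) = (Ep b)`_3].
Proof.
move=> hk; have [h _] := rev_coef b.
by split; apply: h; lia.
Qed.

Lemma B1 k (b : 'I_k -> F) (u : 'rV[F]_k) : (3 <= k)%N -> injective b -> u != 0 ->
  (forall i, (pu u).[b i] = 0) ->
  (Ep b)`_2 ^+ 2 - (Ep b)`_1 * (Ep b)`_3 = 0.
Proof.
move=> hk binj hu hr.
have p0 : pu u != 0 by apply: contra hu => /eqP/pu_eq0 ->.
have rts : all (root (pu u)) [seq b i | i <- enum 'I_k].
  by apply/allP => z /mapP [i _ ->]; apply/eqP; exact: hr.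
have urs : uniq_roots [seq b i | i <- enum 'I_k].
  by rewrite uniq_rootsE map_inj_uniq ?enum_uniq.
have [q hq] := uniq_roots_prod_XsubC rts urs.
rewrite PpE in hq.
have q0 : q != 0 by apply: contra p0 => /eqP q0; rewrite hq q0 mul0r.
have P0 : Pp b != 0 by rewrite -size_poly_eq0 size_Pp.
have sq : (size q <= 2)%N.
  by have := size_pu u; rewrite hq size_mul // size_Pp addnS /= addnC leq_add2l.
have eq : q = (q`_0)%:P + (q`_1)%:P * 'X.
  apply/polyP => i; rewrite coefD coefC coefCM coefX.
  case: i => [|[|i]] /=; rewrite ?mulr0 ?mulr1 ?addr0 ?add0r //.
  by rewrite nth_default //; apply: leq_trans sq _.
have [e1 e2 e3] := Pcoefs b hk.
have z1 : (pu u)`_(k - 1) = 0.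
  apply: coef_pu0 => r; have := ltn_ord r; rewrite /Ex; case: (ltnP r (k - 2)) => h /= ?; apply/eqP; lia.
have z2 : (pu u)`_(k - 2) = 0.
  apply: coef_pu0 => r; have := ltn_ord r; rewrite /Ex; case: (ltnP r (k - 2)) => h /= ?; apply/eqP; lia.
rewrite hq eq coefqP in z1; rewrite hq eq coefqP in z2.
have n1 : (k - 1 == 0)%N = false by apply/eqP; lia.
have n2 : (k - 2 == 0)%N = false by apply/eqP; lia.
have k1 : ((k - 1).-1 = k - 2)%N by lia.
have k2 : ((k - 2).-1 = k - 3)%N by lia.
rewrite n1 k1 e1 e2 in z1; rewrite n2 k2 e2 e3 in z2.
set a := q`_0 in z1 z2 eq; set c := q`_1 in z1 z2 eq.
set E1 := (Ep b)`_1 in z1 z2 *; set E2 := (Ep b)`_2 in z1 z2 *; set E3 := (Ep b)`_3 in z1 z2 *.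
have : (a != 0) || (c != 0).
  rewrite -negb_and; apply/negP => /andP [/eqP a0 /eqP c0].
  by move/eqP: q0; apply; rewrite eq a0 c0 mul0r addr0.
case/orP => h.
  apply: (mulfI h); rewrite mulr0.
  by rewrite (_ : a * _ = E2 * (a * E2 + c * E3) - E3 * (a * E1 + c * E2)); [rewrite z1 z2; ring | ring].
apply: (mulfI h); rewrite mulr0.
by rewrite (_ : c * _ = E2 * (a * E1 + c * E2) - E1 * (a * E2 + c * E3)); [rewrite z1 z2; ring | ring].
Qed.

Lemma B2 k (b : 'I_k -> F) : (3 <= k)%N ->
  (Ep b)`_2 ^+ 2 - (Ep b)`_1 * (Ep b)`_3 = 0 ->
  exists2 u : 'rV[F]_k, u != 0 & forall i, (pu u).[b i] = 0.
Proof.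
move=> hk hD.
have [e1 e2 e3] := Pcoefs b hk.
set E1 := (Ep b)`_1 in e1 hD *; set E2 := (Ep b)`_2 in e2 hD *; set E3 := (Ep b)`_3 in e3 hD *.
have [c0 [c1 [hc hz1 hz2]]] : exists c0 c1, [/\ (c0 != 0) || (c1 != 0),
    c0 * E1 + c1 * E2 = 0 & c0 * E2 + c1 * E3 = 0].
  case: (boolP ((E1 == 0) && (E2 == 0))) => [/andP [/eqP z1 /eqP z2] | nz].
    exists 1, 0; rewrite oner_neq0 z1 z2; split => //; ring.
  exists E2, (- E1); split.
  - by move: nz; rewrite negb_and orbC oppr_eq0.
  - ring.
  - by rewrite -[RHS]hD; ring.
pose q : {poly F} := c0%:P + c1%:P * 'X.
pose p := q * Pp b.
pose u : 'rV[F]_k := \row_(r < k) p`_(Ex k r).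
have P0 : Pp b != 0 by rewrite -size_poly_eq0 size_Pp.
have q0 : q != 0.
  apply/negP => /eqP hq0.
  have h0 : q`_0 = c0 by rewrite coefD coefC coefCM coefX mulr0 addr0.
  have h1 : q`_1 = c1 by rewrite coefD coefC coefCM coefX mulr1 add0r.
  by move: hc; rewrite -h0 -h1 hq0 !coef0 eqxx.
have pE : pu u = p.
  apply/polyP => i; rewrite coef_pu.
  case: (pickP (fun r : 'I_k => Ex k r == i)) => [r hr | none].
    rewrite (big_pred1 r) ?mxE ?(eqP hr) // => s; apply/eqP/eqP => [e|->]; last exact/eqP.
    by apply/val_inj/(@Ex_inj k); rewrite e (eqP hr).
  rewrite big_pred0 // /p /q coefqP.
  have sP := size_Pp b.
  have [->|[->|hi]] := notin_Ex (ltnW hk) (fun r => negbT (none r)).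
  - have -> : (k - 2 == 0)%N = false by apply/eqP; lia.
    by rewrite (_ : (k - 2).-1 = k - 3)%N ?e2 ?e3 ?hz2 //; lia.
  - have -> : (k - 1 == 0)%N = false by apply/eqP; lia.
    by rewrite (_ : (k - 1).-1 = k - 2)%N ?e1 ?e2 ?hz1 //; lia.
  - have -> : (i == 0)%N = false by apply/eqP; lia.
    by rewrite !nth_default ?sP ?mulr0 ?addr0 //; lia.
exists u.
  apply/negP => /eqP u0; move: (mulf_neq0 q0 P0); rewrite -/p -pE u0.
  by rewrite (_ : pu 0 = 0) ?eqxx // /pu big1 // => r _; rewrite mxE scale0r.
move=> i; rewrite pE /p hornerM /Pp horner_prod (bigD1 i) //=.
by rewrite hornerXsubC subrr mul0r mulr0.
Qed.

Lemma Gmul k n (alpha : 'I_n -> F) (u : 'rV[F]_k) j :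
  (u *m gen_mx k alpha) 0 j = (pu u).[alpha j].
Proof.
rewrite !mxE horner_sum; apply: eq_bigr => r _.
by rewrite !mxE hornerZ hornerXn.
Qed.

Lemma G_rowfree k n (alpha : 'I_n -> F) : (3 <= k)%N -> (k + 2 <= n)%N ->
  injective alpha -> row_free (gen_mx k alpha).
Proof.
move=> hk hn ainj.
have inj : forall u : 'rV[F]_k, u *m gen_mx k alpha = 0 -> u = 0.
  move=> u hu; apply/eqP; apply: contraT => u0.
  have p0 : pu u != 0 by apply: contra u0 => /eqP/pu_eq0 ->.
  have rts : all (root (pu u)) [seq alpha i | i <- enum 'I_n].
    by apply/allP => z /mapP [i _ ->]; apply/eqP; rewrite -Gmul hu mxE.
  have urs : uniq [seq alpha i | i <- enum 'I_n] by rewrite map_inj_uniq ?enum_uniq.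
  have := max_poly_roots p0 rts urs; rewrite size_map size_enum_ord.
  have := size_pu u; move=> h1 h2; have := leq_trans h2 h1; lia.
rewrite -kermx_eq0; apply/eqP/row_matrixP => i; rewrite row0; apply: inj.
by rewrite -row_mul mulmx_ker row0.
Qed.
End Poly.

Lemma bigmin_le (T : finType) (P : pred T) (f : T -> nat) x0 j :
  P j -> (\big[minn/x0]_(i | P i) f i <= f j)%N.
Proof.
move=> Pj; rewrite -big_filter.
have : j \in [seq i <- index_enum T | P i] by rewrite mem_filter Pj mem_index_enum.
elim: (filter _ _) => // a s IH; rewrite inE big_cons => /orP [/eqP ->| /IH h].
  exact: geq_minl.
exact: leq_trans (geq_minr _ _) h.
Qed.

Lemma bigmin_ge (T : finType) (P : pred T) (f : T -> nat) x0 y :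
  (y <= x0)%N -> (forall i, P i -> y <= f i)%N -> (y <= \big[minn/x0]_(i | P i) f i)%N.
Proof.
move=> h0 h; elim/big_ind: _ => //.
by move=> a b ha hb; rewrite leq_min ha hb.
Qed.

Section Code.
Variable F : finFieldType.

Definition MinorOK k n (G : 'M[F]_(k, n)) (b : 'I_k -> 'I_n) :=
  forall u : 'rV[F]_k, (forall i, (u *m G) 0 (b i) = 0) -> u = 0.

Lemma wt_le n m (c : 'rV[F]_n) (b : 'I_m -> 'I_n) :
  injective b -> (forall i, c 0 (b i) = 0) -> (hweight c <= n - m)%N.
Proof.
move=> binj hb; rewrite /hweight.
have sub : [set j | c 0 j != 0] \subset ~: (b @: [set: 'I_m]).
  apply/subsetP => j; rewrite !inE => h; apply/imsetP => [[i _ e]].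
  by move: h; rewrite e hb eqxx.
apply: leq_trans (subset_leq_card sub) _.
have := cardsC (b @: [set: 'I_m]); rewrite card_imset // cardsT !card_ord; lia.
Qed.

Lemma wt_ge k n (G : 'M[F]_(k, n)) (u : 'rV[F]_k) : (0 < n)%N -> (k <= n)%N ->
  (forall b : 'I_k -> 'I_n, injective b -> MinorOK G b) ->
  u *m G != 0 -> (n - k + 1 <= hweight (u *m G))%N.
Proof.
move=> hn hkn hM c0; rewrite leqNgt; apply/negP => hlt.
set c := u *m G in c0 hlt.
pose Z := [set j | c 0 j == 0].
have eZ : ~: Z = [set j | c 0 j != 0] by apply/setP => j; rewrite !inE.
have cZ : (k <= #|Z|)%N.
  have := cardsC Z; rewrite eZ card_ord; rewrite /hweight in hlt.
  set w := #|[set j | c 0 j != 0]| in hlt *; lia.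
pose j0 : 'I_n := Ordinal hn.
pose b (i : 'I_k) := nth j0 (enum Z) i.
have sz : size (enum Z) = #|Z| by rewrite cardE.
have binj : injective b.
  move=> x y; rewrite /b => /eqP.
  have hx : (x < size (enum Z))%N by rewrite sz; exact: leq_trans (ltn_ord x) cZ.
  have hy : (y < size (enum Z))%N by rewrite sz; exact: leq_trans (ltn_ord y) cZ.
  by rewrite nth_uniq ?enum_uniq // => /eqP/val_inj.
have hz : forall i, c 0 (b i) = 0.
  move=> i; have : b i \in Z.
    by rewrite -mem_enum mem_nth // sz; exact: leq_trans (ltn_ord i) cZ.
  by rewrite inE => /eqP.
have := hM b binj u hz; move=> u0; move: c0; rewrite /c u0 mul0mx eqxx.
by [].
Qed.

Lemma MDS_iff k n (G : 'M[F]_(k, n)) : (0 < k)%N -> (k <= n)%N -> row_free G ->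
  is_MDS G <-> (forall b : 'I_k -> 'I_n, injective b -> MinorOK G b).
Proof.
move=> hk hkn rf; have rk : \rank G = k by apply/eqP.
rewrite /is_MDS rk; split.
  move=> hM b binj u hu; apply/eqP; apply: contraT => u0.
  have c0 : u *m G != 0.
    by apply: contra u0 => /eqP h; apply/eqP; apply: (row_free_inj rf); rewrite h mul0mx.
  have := @bigmin_le _ (fun v : 'rV[F]_k => v *m G != 0) (fun v => hweight (v *m G)) n u c0.
  rewrite -/(min_dist G) hM.
  have := wt_le binj hu; move=> h1 h2; have := leq_trans h2 h1; lia.
move=> hM; apply/eqP; rewrite eqn_leq; apply/andP; split; last first.
  apply: bigmin_ge; first lia.
  move=> u; exact: wt_ge (leq_trans hk hkn) hkn hM.
have hk1 : (k.-1 <= n)%N by lia.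
pose g (i : 'I_k.-1) : 'I_n := widen_ord hk1 i.
have ginj : injective g by move=> x y /(congr1 val) /= e; apply/val_inj.
pose A := colsub g G.
have nrf : ~~ row_free A.
  rewrite /row_free; apply/negP => /eqP h; have := rank_leq_col A; rewrite h; lia.
rewrite -kermx_eq0 in nrf.
have [i hi] : exists i, row i (kermx A) != 0.
  case: (pickP (fun i => row i (kermx A) != 0)) => [i hi | none]; first by exists i.
  exfalso; move/negP: nrf; apply; apply/eqP/row_matrixP => i; rewrite row0.
  by move: (none i) => /negbT; rewrite negbK => /eqP.
set u := row i (kermx A) in hi.
have uA : u *m A = 0 by rewrite -row_mul mulmx_ker row0.
have c0 : u *m G != 0.
  by apply: contra hi => /eqP h; apply/eqP; apply: (row_free_inj rf); rewrite h mul0mx.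
have hz : forall j, (u *m G) 0 (g j) = 0.
  move=> j; have := congr1 (fun M : 'M[F]_(1, k.-1) => M 0 j) uA; rewrite /A mulmx_colsub !mxE.
  by [].
apply: leq_trans (@bigmin_le _ (fun v : 'rV[F]_k => v *m G != 0) (fun v => hweight (v *m G)) n u c0) _.
have := wt_le ginj hz; move=> h; apply: leq_trans h _; lia.
Qed.
End Code.

Unset Implicit Arguments.
Set Strict Implicit.

Theorem theorem3p4 (F : finFieldType) (n k : nat) (alpha : 'I_n -> F) :
  (3 <= k)%N -> (k <= n - 2)%N -> (n - 2 <= #|F| - 2)%N ->
  injective alpha ->
  is_MDS (gen_mx k alpha) <->
  (forall beta : 'I_k -> 'I_n, injective beta ->
     let b := fun i => alpha (beta i) in
     hsym 2 b ^+ 2 - hsym 1 b * hsym 3 b != 0).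
Proof.
move=> hk hkn _ ainj.
have hkn2 : (k + 2 <= n)%N by lia.
rewrite (MDS_iff (ltnW (ltnW hk)) _ (G_rowfree hk hkn2 ainj)); last lia.
split.
  move=> H beta binj /=; apply/eqP => hD; rewrite Dh_Da in hD.
  have [u u0 hu] := B2 hk hD.
  move/eqP: u0; apply; apply: (H beta binj) => i.
  by rewrite Gmul; exact: hu.
move=> H beta binj u hu; apply/eqP; apply: contraT => u0.
have := H beta binj; rewrite /= Dh_Da.
have binj' : injective (fun i => alpha (beta i)) by move=> x y /ainj /binj.
by rewrite (B1 hk binj' u0) ?eqxx // => i; rewrite -Gmul hu.
Qed.
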